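(* Let $n\geq 2$ and number the crossings of the $n$-foil $1,\dots,n$ in any fixed order. The set of words of the states of the $n$-foil consisting of exactly two closed curves is \[ \mathcal{F}_n=\left\{1^p01^k01^{n-p-k-2}\;\middle|\; 0\leq p\leq n-2,\ 0\leq k\leq n-p-2\right\}\cup\left\{1^n\right\}. \]
   Context: A (shadow) diagram is a finite collection of closed curves in the plane in general position whose only singularities are finitely many transverse double points, called crossings; over/under information is ignored. At a crossing four corners of complementary regions meet, forming two pairs of opposite corners. Splitting a crossing replaces a small neighbourhood of it by two disjoint arcs in one of two ways, each merging one pair of opposite corners into a channel. A state is the result of choosing a split at every crossing; it is a disjoint union of simple closed curves. The $n$-foil ($n\geq 2$) is drawn as the closure of a $2$-strand braid with $n$ crossings: two strands run once around a central point and cross each other $n$ times (the standard diagram of the $(2,n)$ torus knot or link, e.g. the trefoil for $n=3$, two overlapping circles for $n=2$). Its complementary regions are the unbounded region, a central region, and $n$ bigons; at each crossing the central and unbounded regions occupy one pair of opposite corners and two bigons occupy the other pair. The $A$-split at a crossing is the split merging the corners of the central and unbounded regions; the $B$-split merges the two bigon corners. With crossings numbered $1,\dots,n$, a state is recorded by the binary word whose $i$-th letter is $0$ if an $A$-split is applied at crossing $i$ and $1$ if a $B$-split is applied. Notation: $\sigma^k$ denotes $k$ consecutive copies of the letter $\sigma$ (empty if $k\leq 0$), words are concatenated. *)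

(* Defs.v *)
From mathcomp Require Import all_boot all_fingroup.
Set Implicit Arguments. Unset Strict Implicit. Unset Printing Implicit Defensive.

(* Combinatorial model of the n-foil (closure of a 2-strand braid with n
   crossings).  Crossings are numbered 0..n-1 in cyclic order around the
   central point.  Near crossing c there are four endpoints of strand
   arcs, indexed by (c, side, level): side = false (left, towards crossing
   c-1) / true (right, towards crossing c+1); level = false (inner, facing
   the central region) / true (outer, facing the unbounded region).
   The corners at crossing c: between the two left endpoints lies the bigon
   shared with crossing c-1, between the two right endpoints the bigon shared
   with crossing c+1, between the two inner endpoints the central region,
   between the two outer endpoints the unbounded region. *)
Definition foil_pt (n : nat) := ('I_n * bool * bool)%type.

(* The arcs of the diagram outside small neighbourhoods of the crossings:
   the right endpoint of crossing c at a given level is joined to the left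
   endpoint of crossing c+1 (mod n) at the same level. *)
Definition foil_ext n (x : foil_pt n) : foil_pt n :=
  let: (c, s, l) := x in
  if s then (ordS c, false, l) else (ord_pred c, true, l).

(* The two arcs replacing a neighbourhood of crossing c in a state.
   st c = false : A-split (merges the corners of the central and unbounded
     regions): the arcs join the two left endpoints and the two right ones.
   st c = true  : B-split (merges the two bigon corners): the arcs join the
     two inner endpoints and the two outer ones. *)
Definition foil_int n (st : 'I_n -> bool) (x : foil_pt n) : foil_pt n :=
  let: (c, s, l) := x in
  if st c then (c, ~~ s, l) else (c, s, ~~ l).

Definition foil_rel n (st : 'I_n -> bool) : rel (foil_pt n) :=
  fun x y => (foil_ext x == y) || (foil_int st x == y).

Definition foil_ncurves n (st : 'I_n -> bool) : nat :=
  n_comp (foil_rel st) (@predT (foil_pt n)).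

(* The split chosen at the geometric crossing c when the crossings are
   numbered by the bijection num (letter i of the word w is applied at
   crossing num i; letter 1 = true = B-split). *)
Definition word_state n (num : {perm 'I_n}) (w : seq bool) : 'I_n -> bool :=
  fun c => nth false w (num^-1%g c).

Definition Fn (n : nat) (w : seq bool) : Prop :=
  (exists p k, p <= n - 2 /\ k <= n - p - 2 /\
     w = nseq p true ++ false :: nseq k true ++ false :: nseq (n - p - k - 2) true)
  \/ w = nseq n true.

(* Main.v *)
Require Import Defs.
From mathcomp Require Import all_boot all_fingroup.
From mathcomp Require Import zify.
Set Implicit Arguments. Unset Strict Implicit.

Lemma conn_inv (T : finType) (e : rel T) (f : T -> nat) :
  (forall x y, e x y -> f x = f y) -> forall x y, connect e x y -> f x = f y.
Proof.
move=> H x y /connectP [p pth ->]; elim: p x pth => //= z p IH x /andP[exz pz].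
by rewrite (H _ _ exz); apply: IH.
Qed.

Lemma ncomp_ge (T : finType) (e : rel T) (sym : connect_sym e) (f : T -> nat)
  (A : {set T}) : (forall x y, e x y -> f x = f y) -> {in A &, injective f} ->
  #|A| <= n_comp e predT.
Proof.
move=> H injf.
have inj : {in A &, injective (root e)}.
  move=> x y xA yA /eqP; rewrite root_connect // => /(conn_inv H) fxy.
  exact: injf.
rewrite -(card_in_imset inj); apply: subset_leq_card; apply/subsetP => r.
move=> /imsetP [x _ ->]; rewrite !inE /=; apply/andP; split=> //.
exact: roots_root.
Qed.

Lemma ncomp_le (T : finType) (e : rel T) (sym : connect_sym e) (S : {set T}) :
  (forall x, exists2 s, s \in S & connect e x s) -> n_comp e predT <= #|S|.
Proof.
move=> H; apply: leq_trans (leq_imset_card (root e) S).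
apply: subset_leq_card; apply/subsetP => r; rewrite !inE /= => /andP[/eqP rr _].
have [s sS c] := H r; apply/imsetP; exists s => //.
by rewrite -rr; apply/rootP.
Qed.


Section Foil.
Variable m : nat.
Variable st : 'I_m.+1 -> bool.
Local Notation n := m.+1.
Local Notation e := (foil_rel st).

Lemma ordS_val (i : 'I_n) : i < m -> (ordS i : nat) = i.+1.
Proof. by move=> H; rewrite /= modn_small. Qed.
Lemma ordS_max (i : 'I_n) : (i : nat) = m -> (ordS i : nat) = 0.
Proof. by move=> H; rewrite /= H modnn. Qed.
Lemma ord_pred_val (i : 'I_n) : 0 < i -> (ord_pred i : nat) = i.-1.
Proof.
case: i => [[|i] Hi] //= _.
by rewrite modnDr modn_small //; lia.
Qed.
Lemma ord_pred0 (i : 'I_n) : (i : nat) = 0 -> (ord_pred i : nat) = m.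
Proof. by move=> H; rewrite /= H add0n /= modn_small. Qed.

Lemma e_ext x : e x (foil_ext x).
Proof. by rewrite /foil_rel eqxx. Qed.
Lemma e_int x : e x (foil_int st x).
Proof. by rewrite /foil_rel eqxx orbT. Qed.
Lemma ext_inv : involutive (@foil_ext m.+1).
Proof. by case=> [[c [] l]] /=; rewrite ?ordSK ?ord_predK. Qed.
Lemma int_inv : involutive (foil_int st).
Proof. by case=> [[c s] l] /=; case E: (st c) => /=; rewrite E negbK. Qed.
Lemma esym : symmetric e.
Proof.
move=> x y; rewrite /foil_rel; apply/orP/orP; case=> /eqP<-;
by [left; rewrite ext_inv | right; rewrite int_inv].
Qed.
Lemma csym : connect_sym e.
Proof. exact: sym_connect_sym esym. Qed.

Lemma flipA c s l l' : ~~ st c -> connect e (c, s, l) (c, s, l').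
Proof.
move=> H; case: (eqVneq l l') => [->|ne]; first exact: connect0.
apply: connect1; apply/orP; right; rewrite /= (negbTE H).
by case: l l' ne => [] [].
Qed.

Lemma walkdown l c (Hc : c <= m) : (forall i, i <= c -> st (inord i)) ->
  connect e (inord c, true, l) (ord0, false, l).
Proof.
elim: c Hc => [|c IH] Hc H.
  apply/connect1/orP; right; rewrite /= H //=; apply/eqP; congr (_,_,_).
  by apply/val_inj; rewrite /= inordK.
apply: connect_trans (connect1 (e_int _)) _; rewrite /= H //.
apply: connect_trans (connect1 (e_ext _)) _; rewrite /=.
have -> : ord_pred (inord c.+1) = inord c :> 'I_n.
  by apply: ord_inj; rewrite ord_pred_val; rewrite ?inordK //; lia.
apply: IH; first lia.
by move=> i Hi; apply: H; lia.
Qed.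

Lemma back l c (Hc : c <= m) : (exists z : 'I_n, (z <= c) && ~~ st z) ->
  exists2 z, ~~ st z & connect e (inord c, true, l) (z, true, false).
Proof.
elim: c Hc l => [|c IH] Hc l [z /andP[zc nz]].
  have zE : z = inord 0 by apply: ord_inj; rewrite inordK //; lia.
  by exists (inord 0); rewrite -zE //; apply: flipA.
case E: (st (inord c.+1)); last first.
  by exists (inord c.+1); [rewrite E | apply: flipA; rewrite E].
have zc' : z <= c.
  rewrite leq_eqVlt in zc; case/orP: zc => // /eqP zE.
  have zI : z = inord c.+1 by apply: ord_inj; rewrite inordK //; lia.
  by move: nz; rewrite zI E.
have := IH (ltnW Hc) l; case; first by exists z; rewrite zc'.
move=> z' nz' C.
exists z' => //.
apply: connect_trans (connect1 (e_int _)) _; rewrite /= E.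
apply: connect_trans (connect1 (e_ext _)) _; rewrite /=.
have -> : ord_pred (inord c.+1) = inord c :> 'I_n.
  by apply: ord_inj; rewrite ord_pred_val; rewrite ?inordK //; lia.
exact: C.
Qed.

Lemma reach_zero x : (exists z, ~~ st z) ->
  exists2 z, ~~ st z & connect e x (z, true, false).
Proof.
move=> [z0 nz0].
have [c [l C]] : exists c l, connect e x (c, true, l).
  case: x => [[c [] l]]; first by exists c, l; apply: connect0.
  by exists (ord_pred c), l; apply: connect1 (e_ext _).
suff [z nz C'] : exists2 z, ~~ st z & connect e (c, true, l) (z, true, false).
  by exists z => //; apply: connect_trans C C'.
rewrite -(inord_val c).
case: (boolP [exists z : 'I_n, (z <= c) && ~~ st z]) => [/existsP|/existsPn] H.
  by apply: back => //; rewrite -ltnS.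
have W : connect e (inord c, true, l) (ord0, false, l).
  apply: walkdown; first by rewrite -ltnS.
  move=> i Hi; have := H (inord i); rewrite inordK; last by have := ltn_ord c; lia.
  by rewrite Hi /= negbK.
have ex : exists z : 'I_n, (z <= m) && ~~ st z by exists z0; rewrite -ltnS ltn_ord nz0.
have [z nz C'] := back l (leqnn m) ex.
exists z => //; apply: connect_trans W _.
apply: connect_trans (connect1 (e_ext _)) _; rewrite /=.
have -> : ord_pred ord0 = inord m :> 'I_n.
  by apply: ord_inj; rewrite ord_pred0 // inordK.
exact: C'.
Qed.

Definition cnt c := count (fun i => ~~ st (inord i)) (iota 0 c).
Lemma cntS c : cnt c.+1 = cnt c + ~~ st (inord c).
Proof. by rewrite /cnt -addn1 iotaD count_cat /= addn0. Qed.
Lemma cnt_mono a b : a <= b -> cnt a <= cnt b.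
Proof. by move/subnKC <-; rewrite /cnt iotaD count_cat leq_addr. Qed.
Definition K := cnt n.
Definition g (x : foil_pt n) := let: (c, s, l) := x in cnt c + (s && ~~ st c).
Definition f x := g x %% K.

Lemma f_ext_true c l : f (foil_ext (c, true, l)) = f (c, true, l).
Proof.
rewrite /f /foil_ext /g; cbv beta iota; rewrite andTb andFb addn0.
case: (ltnP c m) => Hc.
  by rewrite ordS_val // cntS inord_val.
have Hcm : (c : nat) = m by have := ltn_ord c; lia.
rewrite ordS_max // -{2}(inord_val c) -cntS Hcm modnn mod0n.
by rewrite /K.
Qed.

Lemma f_edge x y : e x y -> f x = f y.
Proof.
rewrite /foil_rel => /orP[/eqP<- | /eqP<-].
  case: x => [[c [] l]]; first by rewrite f_ext_true.
  rewrite -{1}(ext_inv (c, false, l)); exact: f_ext_true.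
case: x => [[c s] l]; rewrite /f /=; case E: (st c) => /=; by rewrite ?E ?andbF.
Qed.

Definition Z := [set z : 'I_n | ~~ st z].
Definition A := (fun z : 'I_n => (z, true, false)) @: Z.

Lemma card_count (T : finType) (a : pred T) : #|a| = count a (enum T).
Proof. rewrite cardE -size_filter /enum_mem -filter_predI; congr size; apply: eq_filter => x /=. by rewrite andbT. Qed.

Lemma card_Z : #|Z| = K.
Proof.
rewrite /K /cnt -val_enum_ord count_map.
rewrite (@eq_card _ _ [pred z | ~~ st z]); last by move=> z; rewrite !inE.
rewrite card_count; apply: eq_count => z /=; by rewrite inord_val.
Qed.

Lemma card_A : #|A| = K.
Proof. by rewrite card_imset ?card_Z // => a b [] . Qed.

Lemma f_inj : {in A &, injective f}.
Proof.
have B : forall z : 'I_n, z \in Z -> 1 <= cnt z + 1 <= K.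
  move=> z; rewrite inE => nz; rewrite leq_addl /=.
  have := cntS z; rewrite inord_val nz /= addn1 => <-.
  by apply: cnt_mono.
have modE : forall a b, 1 <= a <= K -> 1 <= b <= K -> a %% K = b %% K -> a = b.
  move=> a b Ha Hb.
  have mE : forall x, 1 <= x <= K -> x %% K = if x == K then 0 else x.
    move=> x Hx; case: eqP => [->|ne]; first by rewrite modnn.
    by rewrite modn_small //; lia.
  rewrite !mE //; case: eqP; case: eqP; lia.
move=> x y /imsetP[z1 Z1 ->] /imsetP[z2 Z2 ->]; rewrite /f /= => H.
move: H; have := Z1; have := Z2; rewrite !inE => -> -> /= H.
have /eqP := modE _ _ (B _ Z1) (B _ Z2) H.
rewrite eqn_add2r => /eqP Hc; congr (_,_,_).
have key : forall a b : 'I_n, a \in Z -> a < b -> cnt a < cnt b.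
  move=> a b; rewrite inE => na ab.
  have := cntS a; rewrite inord_val na addn1 => <-.
  exact: cnt_mono.
case: (ltngtP z1 z2) => H12; last exact: ord_inj.
  by have := key _ _ Z1 H12; rewrite Hc ltnn.
by have := key _ _ Z2 H12; rewrite Hc ltnn.
Qed.

Lemma ncomp_pos : 0 < K -> n_comp e predT = K.
Proof.
move=> Kp; apply/eqP; rewrite eqn_leq; apply/andP; split.
  rewrite -card_A; apply: ncomp_le; first exact: csym.
  move=> x; have [z nz C] : exists2 z, ~~ st z & connect e x (z, true, false).
    apply: reach_zero; move: Kp; rewrite -card_Z card_gt0 => /set0Pn [z].
    by rewrite inE; exists z.
  by exists (z, true, false) => //; apply: imset_f; rewrite inE.
rewrite -card_A; apply: (ncomp_ge csym (f:=f)) => //; [exact: f_edge | exact: f_inj].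
Qed.

Lemma ncomp_zero : K = 0 -> n_comp e predT = 2.
Proof.
rewrite -card_Z => /cards0_eq Z0.
have allst : forall z, st z.
  move=> z; apply/negPn/negP => nz.
  have : z \in Z by rewrite inE.
  by rewrite Z0 inE.
set S := [set ((ord0 : 'I_n), false, false); (ord0, false, true)].
have cS : #|S| = 2 by rewrite cards2.
apply/eqP; rewrite eqn_leq; apply/andP; split.
  rewrite -cS; apply: ncomp_le; first exact: csym.
  move=> [[c s] l]; exists (ord0, false, l); first by rewrite !inE; case: l.
  have C1 : connect e (c, s, l) (c, true, l).
    case: s; first exact: connect0.
    by apply/connect1/orP; right; rewrite /= allst.
  apply: connect_trans C1 _; rewrite -(inord_val c); apply: walkdown.
    by rewrite -ltnS.
  by move=> i _.
rewrite -cS; apply: (ncomp_ge csym (f := fun x : foil_pt n => nat_of_bool x.2)).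
  move=> [[c s] l] y; rewrite /foil_rel => /orP[/eqP<- | /eqP<-].
    by case: s.
  by rewrite /= allst.
move=> x y; rewrite !inE => /orP[] /eqP -> /orP[] /eqP -> //=.
Qed.
End Foil.

Lemma split_false w : 0 < count negb w -> exists p r, w = nseq p true ++ false :: r.
Proof.
elim: w => //= b w IH; case: b => /= H; last by exists 0, w.
by have [p [r ->]] := IH H; exists p.+1, r.
Qed.

Lemma count0 w : count negb w = 0 -> w = nseq (size w) true.
Proof. by elim: w => //= b w IH; case: b => //= H; rewrite -IH. Qed.

Lemma Fn_count n w : size w = n -> (Fn n w <-> count negb w = 0 \/ count negb w = 2).
Proof.
move=> Hw; split.
  case=> [[p [k [_ [_ ->]]]] | ->]; [right | left];
  by rewrite ?count_cat /= ?count_cat /= ?count_nseq /= ?mul0n.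
case=> H; first by right; rewrite (count0 H) Hw.
left.
have [|p [r E]] := split_false (w := w); first by rewrite H.
move: H Hw; rewrite E count_cat count_nseq /= mul0n add0n add1n => -[H1].
have [|k [r' E']] := split_false (w := r); first by rewrite H1.
move: H1; rewrite E' count_cat count_nseq /= mul0n add0n add1n => -[H2].
rewrite (count0 H2) !size_cat !size_nseq /= size_cat size_nseq /= size_nseq => Hn.
exists p, k; split; first lia.
split; first lia.
by have -> : n - p - k - 2 = size r' by lia.
Qed.

Theorem corollary23 (n : nat) (hn : 2 <= n) (num : {perm 'I_n}) (w : seq bool) :
  size w = n ->
  (foil_ncurves (word_state num w) = 2 <-> Fn n w).
Proof.
case: n hn num w => [|m] // hn num w Hw.
set st := word_state num w.
have HK : K st = count negb w.
  rewrite -card_Z.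
  have -> : Z st = (fun z => (num^-1)%g z) @^-1: [set i : 'I_m.+1 | ~~ nth false w i].
    by apply/setP => z; rewrite !inE.
  rewrite card_preimset; last exact: perm_inj.
  rewrite (@eq_card _ _ [pred i : 'I_m.+1 | ~~ nth false w i]); last by move=> i; rewrite inE.
  rewrite card_count -[in RHS](mkseq_nth false w) Hw /mkseq count_map -val_enum_ord count_map.
  by [].
rewrite /foil_ncurves (Fn_count Hw) -HK.
case: (posnP (K st)) => [K0|Kp].
  by rewrite ncomp_zero //; split => // _; left.
rewrite ncomp_pos //; split => [->|[]]; [by right | lia | by []].
Qed.
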